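(* Let $R=[0,1]^2$, $s\in\mathbb{N}$, $u=2^{-s}$, and let $(B_1,B_2)$ be a good box pair. Let $(p,q),(p',q')\in B_1\times B_2$ with $p<q$ and $p'<q'$, and let $\ell,\ell'$ be the lines through $p,q$ and through $p',q'$ respectively. With $\lambda_p,\lambda_q$ the parameters of $p,q$ along $\ell$ and $\lambda_{p'},\lambda_{q'}$ those of $p',q'$ along $\ell'$, we have $|\lambda_p-\lambda_{p'}|\le\sqrt2u+4\sqrt u$ and $|\lambda_q-\lambda_{q'}|\le\sqrt2u+4\sqrt u$. As a consequence, $L=O(\sqrt u)$.
   Context: For $p,q\in\mathbb{R}^2$ write $p\le q$ (resp. $p<q$) if both coordinates satisfy $\le$ (resp. $<$). $R$ is split into $2^s\times2^s$ congruent closed squares (''boxes'') of side length $u$. A box pair is an ordered pair $(B_1,B_2)$ of boxes with centers $c_1,c_2$. Let $\mathcal{L}$ be the set of non-vertical lines in $\mathbb{R}^2$ with positive slope; each $\ell\in\mathcal{L}$ meets the line $y=-x$ in a unique point $b$ and is parametrized as $b+\lambda a$ with $a=(a_1,a_2)$ its unit direction vector with positive coordinates; $\hat{\ell}:=\min\{a_1,a_2\}$; for $p\in\ell$, $\lambda_p$ is the parameter with $p=b+\lambda_pa$. A line $\ell\in\mathcal{L}$ traverses $(B_1,B_2)$ if it meets both boxes; $\ell_c$ is the line through $c_1,c_2$. A box pair is null if $c_1\not\le c_2$; close if $c_1\le c_2$ and $\|c_1-c_2\|_2<\sqrt u$; non-diagonal if $c_1\le c_2$, $\|c_1-c_2\|_2\ge\sqrt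 u$, and every traversing $\ell\in\mathcal{L}$ satisfies $\hat{\ell}<u^{1/5}$; good if it is neither null, close, nor non-diagonal. $L_1$ is the supremum of $|\lambda_p-\lambda_{c_1}|$ over traversing lines $\ell$ and points $p\in\ell\cap B_1$ ($\lambda_p$ along $\ell$, $\lambda_{c_1}$ along $\ell_c$), $L_2$ likewise for $B_2$ and $c_2$, and $L:=\max\{L_1,L_2\}$. $O(\sqrt u)$ means bounded by an absolute constant times $\sqrt u$, uniformly over $s$ and good box pairs. *)

(* Defs.v *)
From Stdlib Require Import Reals Lra.
Open Scope R_scope.

Definition pt := (R * R)%type.

Definition ple (p q : pt) : Prop := fst p <= fst q /\ snd p <= snd q.
Definition plt (p q : pt) : Prop := fst p < fst q /\ snd p < snd q.

Definition dist2 (p q : pt) : R :=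
  sqrt ((fst p - fst q) ^ 2 + (snd p - snd q) ^ 2).

Definition side (s : nat) : R := (/ 2) ^ s.

(* A line in the class L is represented by the pair (b, a): b is its
   intersection with y = -x and a its unit direction vector with positive
   coordinates. Its points are b + lambda a. *)
Definition line_L (b a : pt) : Prop :=
  fst b + snd b = 0 /\ 0 < fst a /\ 0 < snd a /\ fst a ^ 2 + snd a ^ 2 = 1.

Definition on_line (b a : pt) (lam : R) (p : pt) : Prop :=
  p = (fst b + lam * fst a, snd b + lam * snd a).

Definition lhat (a : pt) : R := Rmin (fst a) (snd a).

(* Boxes: R = [0,1]^2 split into 2^s x 2^s closed squares; box (i,j) is
   [i u, (i+1) u] x [j u, (j+1) u] with i, j < 2^s. *)
Definition is_box (s i j : nat) : Prop := (i < 2 ^ s)%nat /\ (j < 2 ^ s)%nat.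

Definition in_box (s i j : nat) (p : pt) : Prop :=
  INR i * side s <= fst p <= (INR i + 1) * side s /\
  INR j * side s <= snd p <= (INR j + 1) * side s.

Definition center (s i j : nat) : pt :=
  ((INR i + / 2) * side s, (INR j + / 2) * side s).

Definition meets_box (s i j : nat) (b a : pt) : Prop :=
  exists p lam, in_box s i j p /\ on_line b a lam p.

Definition traverses (s i1 j1 i2 j2 : nat) (b a : pt) : Prop :=
  line_L b a /\ meets_box s i1 j1 b a /\ meets_box s i2 j2 b a.

Definition null_pair (s i1 j1 i2 j2 : nat) : Prop :=
  ~ ple (center s i1 j1) (center s i2 j2).

Definition close_pair (s i1 j1 i2 j2 : nat) : Prop :=
  ple (center s i1 j1) (center s i2 j2) /\
  dist2 (center s i1 j1) (center s i2 j2) < sqrt (side s).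

Definition nondiagonal_pair (s i1 j1 i2 j2 : nat) : Prop :=
  ple (center s i1 j1) (center s i2 j2) /\
  dist2 (center s i1 j1) (center s i2 j2) >= sqrt (side s) /\
  (forall b a, traverses s i1 j1 i2 j2 b a -> lhat a < Rpower (side s) (/ 5)).

Definition good_pair (s i1 j1 i2 j2 : nat) : Prop :=
  is_box s i1 j1 /\ is_box s i2 j2 /\
  ~ null_pair s i1 j1 i2 j2 /\ ~ close_pair s i1 j1 i2 j2 /\
  ~ nondiagonal_pair s i1 j1 i2 j2.

(* Main.v *)
Require Import Defs.
From Stdlib Require Import Reals Lra Psatz Classical.
Open Scope R_scope.

Lemma tri (X1 X2 Y1 Y2 A B : R) : 0 <= A -> 0 <= B ->
  X1^2 + X2^2 <= A^2 -> Y1^2 + Y2^2 <= B^2 ->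
  (X1+Y1)^2 + (X2+Y2)^2 <= (A+B)^2.
Proof.
  intros HA HB HX HY.
  assert (CS : (X1*Y1+X2*Y2)^2 <= (A*B)^2).
  { assert (E: (X1*Y1+X2*Y2)^2 + (X1*Y2-X2*Y1)^2 = (X1^2+X2^2)*(Y1^2+Y2^2)) by ring.
    assert (0 <= (X1*Y2-X2*Y1)^2) by apply pow2_ge_0.
    assert ((X1^2+X2^2)*(Y1^2+Y2^2) <= A^2*B^2).
    { apply Rmult_le_compat.
      - assert (0 <= X1^2) by apply pow2_ge_0. assert (0 <= X2^2) by apply pow2_ge_0. lra.
      - assert (0 <= Y1^2) by apply pow2_ge_0. assert (0 <= Y2^2) by apply pow2_ge_0. lra.
      - exact HX.
      - exact HY. }
    nra. }
  assert (X1*Y1+X2*Y2 <= A*B).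
  { destruct (Rle_or_lt (X1*Y1+X2*Y2) (A*B)) as [h|h]; auto.
    assert (0 <= A*B) by nra. nra. }
  nra.
Qed.

Lemma sig_diff (a1 a2 c1 c2 rho : R) :
  0 < a1 -> 0 < a2 -> 0 < c1 -> 0 < c2 ->
  a1^2 + a2^2 = 1 -> c1^2 + c2^2 = 1 ->
  Rabs (a1 - a2) <= rho -> Rabs (c1 - c2) <= rho ->
  Rabs ((c1+c2) - (a1+a2)) <= rho * Rabs (a1*c2 - a2*c1).
Proof.
  intros h1 h2 h3 h4 ha hc hr1 hr2.
  assert (E: ((c1+c2) - (a1+a2)) * ((c1+c2)+(a1+a2)) =
             (a1*c2 - a2*c1)*((a1-a2)*(c1+c2) + (c1-c2)*(a1+a2))).
  { assert (E0: ((c1+c2) - (a1+a2)) * ((c1+c2)+(a1+a2)) -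
             (a1*c2 - a2*c1)*((a1-a2)*(c1+c2) + (c1-c2)*(a1+a2)) =
             2*c1*c2*(1 - (a1^2+a2^2)) - 2*a1*a2*(1-(c1^2+c2^2)) + (c1^2+c2^2) - (a1^2+a2^2)) by ring.
    rewrite ha, hc in E0. lra. }
  assert (P: 0 < (c1+c2)+(a1+a2)) by lra.
  assert (H: Rabs (((c1+c2) - (a1+a2)) * ((c1+c2)+(a1+a2))) <=
             rho * Rabs (a1*c2 - a2*c1) * ((c1+c2)+(a1+a2))).
  { rewrite E, Rabs_mult.
    assert (Rabs ((a1-a2)*(c1+c2) + (c1-c2)*(a1+a2)) <= rho*((c1+c2)+(a1+a2))).
    { eapply Rle_trans. apply Rabs_triang. rewrite !Rabs_mult.
      rewrite (Rabs_right (c1+c2)) by lra. rewrite (Rabs_right (a1+a2)) by lra.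
      nra. }
    assert (0 <= Rabs (a1*c2 - a2*c1)) by apply Rabs_pos.
    nra. }
  rewrite Rabs_mult, (Rabs_right ((c1+c2)+(a1+a2))) in H by lra.
  nra.
Qed.

Lemma Rabs_le_inv (a b : R) : Rabs a <= b -> -b <= a <= b.
Proof. unfold Rabs; destruct (Rcase_abs a); intros; lra. Qed.

Lemma sq_le (a b : R) : 0 <= b -> a^2 <= b^2 -> a <= b.
Proof.
  intros hb h. destruct (Rle_or_lt a b) as [H|H]; auto.
  assert (b*b < a*a) by (apply Rmult_le_0_lt_compat; lra). nra.
Qed.

Lemma len_lb (L a1 a2 D1 D2 u x r2 : R) : 0 <= L -> a1^2 + a2^2 = 1 ->
  Rabs (L*a1 - D1) <= u -> Rabs (L*a2 - D2) <= u ->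
  x^2 <= D1^2 + D2^2 -> 0 < x -> r2^2 = 2 -> 0 < r2 -> 0 < u ->
  x - r2*u <= L.
Proof.
  intros hL ha h1 h2 hD hx hr2 hr2p hu.
  apply Rabs_le_inv in h1. apply Rabs_le_inv in h2.
  assert (X : (L*a1)^2 + (L*a2)^2 <= L^2).
  { replace ((L*a1)^2 + (L*a2)^2) with (L^2*(a1^2+a2^2)) by ring. rewrite ha. lra. }
  assert (Y : (D1 - L*a1)^2 + (D2 - L*a2)^2 <= (r2*u)^2).
  { replace ((r2*u)^2) with (r2^2*u^2) by ring. rewrite hr2.
    assert ((D1 - L*a1)^2 <= u^2) by nra.
    assert ((D2 - L*a2)^2 <= u^2) by nra. lra. }
  assert (T := tri (L*a1) (L*a2) (D1 - L*a1) (D2 - L*a2) L (r2*u) hL ltac:(nra) X Y).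
  replace (L*a1 + (D1 - L*a1)) with D1 in T by ring.
  replace (L*a2 + (D2 - L*a2)) with D2 in T by ring.
  assert (x^2 <= (L + r2*u)^2) by lra.
  assert (0 <= L + r2*u) by nra.
  nra.
Qed.

Lemma cross_b (L L' a1 a2 b1 b2 D1 D2 u : R) : 0 < L -> 0 < a1 -> 0 < a2 ->
  Rabs (L*a1 - D1) <= u -> Rabs (L*a2 - D2) <= u ->
  Rabs (L'*b1 - D1) <= u -> Rabs (L'*b2 - D2) <= u ->
  L' * Rabs (a1*b2 - a2*b1) <= 2*u*(a1+a2).
Proof.
  intros hL p1 p2 h1 h2 h3 h4.
  apply Rabs_le_inv in h1. apply Rabs_le_inv in h2.
  apply Rabs_le_inv in h3. apply Rabs_le_inv in h4.
  set (z1 := L'*b1 - L*a1). set (z2 := L'*b2 - L*a2).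
  assert (E : L * (L' * (a1*b2 - a2*b1)) = L * (a1*z2 - a2*z1)) by (unfold z1, z2; ring).
  assert (B : Rabs (a1*z2 - a2*z1) <= 2*u*(a1+a2)).
  { apply Rabs_le. unfold z1, z2 in *. split; nra. }
  assert (E2 : L' * (a1*b2 - a2*b1) = a1*z2 - a2*z1).
  { apply (Rmult_eq_reg_l L); [exact E| lra]. }
  destruct (Rle_or_lt 0 L') as [hl|hl].
  - rewrite <- (Rabs_right L') by lra. rewrite <- Rabs_mult, E2. exact B.
  - assert (0 <= Rabs (a1*b2 - a2*b1)) by apply Rabs_pos.
    assert (0 <= Rabs (a1*z2 - a2*z1)) by apply Rabs_pos. nra.
Qed.

Lemma eps_b (L a1 a2 t s1 s2 D1 D2 u w r2 x eps : R) :
  0 < L -> a1^2 + a2^2 = 1 -> 0 < a1 -> 0 < a2 ->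
  s1^2 + s2^2 = 1 -> w <= s1 -> w <= s2 -> 0 < t ->
  Rabs (t*s1 - D1) <= u -> Rabs (t*s2 - D2) <= u ->
  Rabs (L*a1 - D1) <= u -> Rabs (L*a2 - D2) <= u ->
  x - r2*u <= t -> r2^2 = 2 -> 0 < r2 -> 0 < u -> 0 <= eps -> eps <= w ->
  2*u + 2*r2*u*eps <= (x - r2*u)*(w - eps) ->
  eps <= a1 /\ eps <= a2.
Proof.
  intros hL ha p1 p2 hs w1 w2 ht h1 h2 h3 h4 hV hr2 hr2p hu he0 hew hnum.
  apply Rabs_le_inv in h1. apply Rabs_le_inv in h2.
  apply Rabs_le_inv in h3. apply Rabs_le_inv in h4.
  assert (X : (t*s1)^2 + (t*s2)^2 <= t^2).
  { replace ((t*s1)^2 + (t*s2)^2) with (t^2*(s1^2+s2^2)) by ring. rewrite hs. lra. }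
  assert (Y : (L*a1 - t*s1)^2 + (L*a2 - t*s2)^2 <= (2*r2*u)^2).
  { replace ((2*r2*u)^2) with (4*r2^2*u^2) by ring. rewrite hr2.
    assert ((L*a1 - t*s1)^2 <= 4*u^2) by nra.
    assert ((L*a2 - t*s2)^2 <= 4*u^2) by nra. lra. }
  assert (T := tri (t*s1) (t*s2) (L*a1 - t*s1) (L*a2 - t*s2) t (2*r2*u) ltac:(lra)
     ltac:(nra) X Y).
  replace (t*s1 + (L*a1 - t*s1)) with (L*a1) in T by ring.
  replace (t*s2 + (L*a2 - t*s2)) with (L*a2) in T by ring.
  assert (L^2 <= (t + 2*r2*u)^2) by nra.
  assert (HL : L <= t + 2*r2*u) by (apply sq_le; nra).
  assert (t*(w-eps) >= (x - r2*u)*(w-eps)) by nra.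
  split.
  - assert (L*a1 >= t*w - 2*u) by nra.
    assert (L*a1 >= eps*L) by nra. nra.
  - assert (L*a2 >= t*w - 2*u) by nra.
    assert (L*a2 >= eps*L) by nra. nra.
Qed.

Lemma unit_facts (a1 a2 r2 : R) : 0 < a1 -> 0 < a2 -> a1^2+a2^2 = 1 -> 0 < r2 -> r2^2 = 2 ->
  1 <= a1 + a2 /\ a1 + a2 <= r2 /\ a1 <= 1 /\ a2 <= 1.
Proof.
  intros h1 h2 h r hr.
  assert (P : 0 < a1*a2) by (apply Rmult_lt_0_compat; lra).
  assert (E : (a1+a2)^2 = 1 + 2*(a1*a2)) by (rewrite <- h; ring).
  assert (Q : 2*(a1*a2) <= 1) by (assert (0 <= (a1-a2)^2) by apply pow2_ge_0; nra).
  assert (0 <= a1^2) by apply pow2_ge_0. assert (0 <= a2^2) by apply pow2_ge_0.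
  repeat split.
  - apply sq_le; [lra | ]. rewrite E. lra.
  - apply sq_le; [lra | ]. rewrite E, hr. lra.
  - apply sq_le; lra.
  - apply sq_le; lra.
Qed.

Lemma diff_eps (a1 a2 eps : R) : eps <= a1 -> eps <= a2 -> a1 <= 1 -> a2 <= 1 ->
  Rabs (a1 - a2) <= 1 - eps.
Proof. intros; apply Rabs_le; lra. Qed.

Lemma Kgen (a1 a2 b1 b2 L L' D1 D2 u eps r2 : R) :
  0 < a1 -> 0 < a2 -> a1^2+a2^2 = 1 -> 0 < b1 -> 0 < b2 -> b1^2+b2^2=1 ->
  0 < r2 -> r2^2 = 2 -> 0 < L -> 0 < L' ->
  Rabs (L*a1 - D1) <= u -> Rabs (L*a2 - D2) <= u ->
  Rabs (L'*b1 - D1) <= u -> Rabs (L'*b2 - D2) <= u ->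
  eps <= a1 -> eps <= a2 -> eps <= b1 -> eps <= b2 ->
  Rabs (/(a1+a2) - /(b1+b2)) * (b1+b2) * L' <= (1-eps)*(2*u).
Proof.
  intros pa1 pa2 ha pb1 pb2 hb r hr hL hL' h1 h2 h3 h4 e1 e2 e3 e4.
  destruct (unit_facts a1 a2 r2) as [sa1 [sa2 [a1le a2le]]]; auto.
  destruct (unit_facts b1 b2 r2) as [sb1 [sb2 [b1le b2le]]]; auto.
  assert (SD := sig_diff a1 a2 b1 b2 (1-eps) pa1 pa2 pb1 pb2 ha hb
     (diff_eps a1 a2 eps e1 e2 a1le a2le) (diff_eps b1 b2 eps e3 e4 b1le b2le)).
  assert (CB := cross_b L L' a1 a2 b1 b2 D1 D2 u hL pa1 pa2 h1 h2 h3 h4).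
  assert (E : /(a1+a2) - /(b1+b2) = ((b1+b2) - (a1+a2)) / ((a1+a2)*(b1+b2))).
  { field. lra. }
  rewrite E. unfold Rdiv. rewrite Rabs_mult.
  rewrite (Rabs_right (/ ((a1+a2)*(b1+b2)))).
  2: { apply Rle_ge, Rlt_le, Rinv_0_lt_compat; nra. }
  set (K := Rabs ((b1+b2) - (a1+a2))) in *.
  set (X := Rabs (a1*b2 - a2*b1)) in *.
  assert (0 <= X) by apply Rabs_pos.
  assert (0 <= 1 - eps) by lra.
  assert (K * L' <= (1-eps) * (2*u*(a1+a2))).
  { apply Rle_trans with ((1-eps)*X*L'). apply Rmult_le_compat_r; lra.
    rewrite Rmult_assoc. apply Rmult_le_compat_l; lra. }
  replace (K * / ((a1 + a2) * (b1 + b2)) * (b1 + b2) * L') with (K*L' / (a1+a2)).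
  2: { field. lra. }
  apply Rle_trans with ((1 - eps) * (2 * u * (a1 + a2)) / (a1+a2)).
  apply Rmult_le_compat_r. apply Rlt_le, Rinv_0_lt_compat; lra. assumption.
  right. field. lra.
Qed.

Lemma prod_lb (a1 a2 e : R) : 0 < a1 -> 0 < a2 -> a1^2+a2^2 = 1 -> e <= a1 -> e <= a2 -> 0 <= e ->
  (e^2 - e^4) <= (a1*a2)^2.
Proof.
  intros p1 p2 h e1 e2 e0.
  assert (e^2 <= a1^2) by (apply pow_incr; lra).
  assert (e^2 <= a2^2) by (apply pow_incr; lra).
  assert (0 <= (a1^2 - e^2)*(a2^2-e^2)) by (apply Rmult_le_pos; lra).
  replace ((a1*a2)^2) with (a1^2*a2^2) by ring.
  replace (e^4) with (e^2*e^2) by ring. nra.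
Qed.

Lemma sig_lb (a1 a2 e c : R) : 0 < a1 -> 0 < a2 -> a1^2+a2^2 = 1 -> e <= a1 -> e <= a2 -> 0 <= e ->
  0 <= c -> c^2 <= e^2 - e^4 -> 0 <= 2*c ->
  forall m, 0 <= m -> m^2 <= 1 + 2*c -> m <= a1 + a2.
Proof.
  intros p1 p2 h e1 e2 e0 c0 hc _ m m0 hm.
  assert (P := prod_lb a1 a2 e p1 p2 h e1 e2 e0).
  assert (c <= a1*a2) by (apply sq_le; [apply Rlt_le, Rmult_lt_0_compat; lra | lra]).
  apply sq_le; [lra|].
  replace ((a1+a2)^2) with (a1^2+a2^2 + 2*(a1*a2)) by ring. rewrite h. lra.
Qed.

Lemma tpos (t s1 s2 D1 D2 u : R) : 0 < s1 -> 0 < s2 -> 0 <= D1 -> 0 <= D2 ->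
  Rabs (t*s1 - D1) <= u -> Rabs (t*s2 - D2) <= u -> u <= D1^2 + D2^2 -> 0 < u -> u < 1/2 -> 0 < t.
Proof.
  intros p1 p2 d1 d2 h1 h2 hD hu hu2.
  apply Rabs_le_inv in h1. apply Rabs_le_inv in h2.
  apply Rnot_le_lt; intro ht.
  assert (t*s1 <= 0) by nra. assert (t*s2 <= 0) by nra.
  assert (D1^2 <= u^2) by (apply pow_incr; lra).
  assert (D2^2 <= u^2) by (apply pow_incr; lra).
  nra.
Qed.

Lemma Kreal (u x w r2 a1 a2 b1 b2 L L' D1 D2 : R) :
  0 < u -> u <= 1 -> 0 < x -> x^2 = u -> 0 < r2 -> r2^2 = 2 -> 0 < w -> w^5 = u ->
  (1/32 <= u \/ u = 1/64 \/ u = 1/128 \/ u <= 1/256) ->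
  0 < a1 -> 0 < a2 -> a1^2+a2^2 = 1 -> 0 < b1 -> 0 < b2 -> b1^2+b2^2=1 ->
  0 < L -> 0 < L' ->
  Rabs (L*a1 - D1) <= u -> Rabs (L*a2 - D2) <= u ->
  Rabs (L'*b1 - D1) <= u -> Rabs (L'*b2 - D2) <= u ->
  0 <= D1 -> 0 <= D2 -> u <= D1^2 + D2^2 ->
  (u < 1/32 -> exists t s1 s2, s1^2+s2^2 = 1 /\ 0 < s1 /\ 0 < s2 /\ w <= s1 /\ w <= s2 /\
       Rabs (t*s1 - D1) <= u /\ Rabs (t*s2 - D2) <= u) ->
  exists G, Rabs (/(a1+a2) - /(b1+b2)) <= G /\ 2*u + 2*G <= r2*u + 4*x.
Proof.
  intros hu hu1 hx hxu hr hr2 hw hwu reg pa1 pa2 ha pb1 pb2 hb hL hL' h1 h2 h3 h4 D1p D2p hD good.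
  destruct (unit_facts a1 a2 r2) as [sa1 [sa2 [a1le a2le]]]; auto.
  destruct (unit_facts b1 b2 r2) as [sb1 [sb2 [b1le b2le]]]; auto.
  assert (r2lo : 1.4142 <= r2) by (apply Rnot_lt_le; intro; assert (r2*r2 < 1.4142*1.4142) by (apply Rmult_le_0_lt_compat; lra); nra).
  assert (r2hi : r2 <= 1.4143) by (apply sq_le; nra).
  assert (Kpos : 0 <= Rabs (/(a1+a2) - /(b1+b2))) by apply Rabs_pos.
  destruct reg as [R1 | [R2 | [R3 | R4]]].
  -
    exists (1 - r2/2). split.
    + assert (/ r2 <= / (a1+a2)) by (apply Rinv_le_contravar; lra).
      assert (/ r2 <= / (b1+b2)) by (apply Rinv_le_contravar; lra).
      assert (/ (a1+a2) <= 1) by (rewrite <- Rinv_1; apply Rinv_le_contravar; lra).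
      assert (/ (b1+b2) <= 1) by (rewrite <- Rinv_1; apply Rinv_le_contravar; lra).
      assert (E : / r2 = r2/2) by (field_simplify; [|lra]; field_simplify; [rewrite <- hr2; field|]; lra).
      apply Rabs_le. lra.
    + assert (x <= 1) by (apply sq_le; lra).
      assert (0.176 <= x) by (apply Rnot_lt_le; intro; nra).
      assert ((x - 0.176)*(x-1) <= 0) by nra.
      assert ((2 - r2)*(x^2+1) <= 0.5858*(x^2+1)) by (apply Rmult_le_compat_r; nra).
      nra.
  - assert (G1 : u < 1/32) by lra.
    destruct (good G1) as [t [s1 [s2 [hs [ps1 [ps2 [ws1 [ws2 [ht1 ht2]]]]]]]]].
    assert (tp : 0 < t) by (apply (tpos t s1 s2 D1 D2 u); auto; lra).
    assert (tV : x - r2*u <= t) by (apply (len_lb t s1 s2 D1 D2 u x r2); auto; lra).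
    assert (LV : x - r2*u <= L') by (apply (len_lb L' b1 b2 D1 D2 u x r2); auto; lra).
    assert (x = 1/8) by (apply Rle_antisym; apply sq_le; nra).
    assert (w43 : 0.43 <= w).
    { apply Rnot_lt_le; intro. assert (w^5 <= 0.43^5) by (apply pow_incr; lra). lra. }
    assert (EA := eps_b L a1 a2 t s1 s2 D1 D2 u w r2 x 0.08 hL ha pa1 pa2 hs ws1 ws2 tp
                   ht1 ht2 h1 h2 tV hr2 hr hu ltac:(lra) ltac:(lra) ltac:(nra)).
    assert (EB := eps_b L' b1 b2 t s1 s2 D1 D2 u w r2 x 0.08 hL' hb pb1 pb2 hs ws1 ws2 tp
                   ht1 ht2 h3 h4 tV hr2 hr hu ltac:(lra) ltac:(lra) ltac:(nra)).
    assert (SA := sig_lb a1 a2 0.08 0.079 pa1 pa2 ha (proj1 EA) (proj2 EA) ltac:(lra) ltac:(lra) ltac:(lra) ltac:(lra) 1.076 ltac:(lra) ltac:(lra)).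
    assert (SB := sig_lb b1 b2 0.08 0.079 pb1 pb2 hb (proj1 EB) (proj2 EB) ltac:(lra) ltac:(lra) ltac:(lra) ltac:(lra) 1.076 ltac:(lra) ltac:(lra)).
    exists (/1.076 - r2/2). split.
    + assert (/ r2 <= / (a1+a2)) by (apply Rinv_le_contravar; lra).
      assert (/ r2 <= / (b1+b2)) by (apply Rinv_le_contravar; lra).
      assert (/ (a1+a2) <= /1.076) by (apply Rinv_le_contravar; lra).
      assert (/ (b1+b2) <= /1.076) by (apply Rinv_le_contravar; lra).
      assert (E : / r2 = r2/2) by (field_simplify; [|lra]; field_simplify; [rewrite <- hr2; field|]; lra).
      apply Rabs_le. lra.
    + assert (r2*u = r2/64) by (rewrite R2; field). lra.
  - assert (G1 : u < 1/32) by lra.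
    destruct (good G1) as [t [s1 [s2 [hs [ps1 [ps2 [ws1 [ws2 [ht1 ht2]]]]]]]]].
    assert (tp : 0 < t) by (apply (tpos t s1 s2 D1 D2 u); auto; lra).
    assert (tV : x - r2*u <= t) by (apply (len_lb t s1 s2 D1 D2 u x r2); auto; lra).
    assert (LV : x - r2*u <= L') by (apply (len_lb L' b1 b2 D1 D2 u x r2); auto; lra).
    assert (xlo : 0.08838 <= x) by (apply Rnot_lt_le; intro; nra).
    assert (xhi : x <= 0.08839) by (apply sq_le; nra).
    assert (w43 : 0.378 <= w).
    { apply Rnot_lt_le; intro. assert (w^5 <= 0.378^5) by (apply pow_incr; lra). lra. }
    assert (r2u : r2*u = r2/128) by (rewrite R3; field).
    assert (V0 : 0.0773 <= x - r2*u) by lra.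
    assert (EA := eps_b L a1 a2 t s1 s2 D1 D2 u w r2 x 0.13 hL ha pa1 pa2 hs ws1 ws2 tp
                   ht1 ht2 h1 h2 tV hr2 hr hu ltac:(lra) ltac:(lra) ltac:(nra)).
    assert (EB := eps_b L' b1 b2 t s1 s2 D1 D2 u w r2 x 0.13 hL' hb pb1 pb2 hs ws1 ws2 tp
                   ht1 ht2 h3 h4 tV hr2 hr hu ltac:(lra) ltac:(lra) ltac:(nra)).
    assert (SB := sig_lb b1 b2 0.13 0.128 pb1 pb2 hb (proj1 EB) (proj2 EB) ltac:(lra) ltac:(lra) ltac:(lra) ltac:(lra) 1.12 ltac:(lra) ltac:(lra)).
    assert (KG := Kgen a1 a2 b1 b2 L L' D1 D2 u 0.13 r2 pa1 pa2 ha pb1 pb2 hb hr hr2 hL hL'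
                   h1 h2 h3 h4 (proj1 EA) (proj2 EA) (proj1 EB) (proj2 EB)).
    set (K := Rabs (/ (a1 + a2) - / (b1 + b2))) in *.
    exists (0.87*(2/128)/(1.12*0.0773)). split.
    + assert (K*(1.12*0.0773) <= K*(b1+b2)*L').
      { rewrite Rmult_assoc. apply Rmult_le_compat_l; [lra|]. apply Rmult_le_compat; lra. }
      rewrite R3 in KG.
      apply (Rmult_le_reg_r (1.12*0.0773)); [lra|]. unfold Rdiv.
      rewrite Rmult_assoc, Rinv_l by lra. lra.
    + lra.
  - assert (G1 : u < 1/32) by lra.
    destruct (good G1) as [t [s1 [s2 [hs [ps1 [ps2 [ws1 [ws2 [ht1 ht2]]]]]]]]].
    assert (tp : 0 < t) by (apply (tpos t s1 s2 D1 D2 u); auto; lra).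
    assert (tV : x - r2*u <= t) by (apply (len_lb t s1 s2 D1 D2 u x r2); auto; lra).
    assert (LV : x - r2*u <= L') by (apply (len_lb L' b1 b2 D1 D2 u x r2); auto; lra).
    assert (xhi : x <= 1/16) by (apply sq_le; nra).
    assert (w33 : w < 0.33).
    { apply Rnot_le_lt; intro. assert (0.33^5 <= w^5) by (apply pow_incr; lra). lra. }
    assert (w3 : w^3 <= 0.04).
    { assert (w^3 <= 0.33^3) by (apply pow_incr; lra). lra. }
    assert (w5x : 5*x <= w).
    { apply sq_le; [lra|]. replace ((5*x)^2) with (25*x^2) by ring. rewrite hxu, <- hwu.
      replace (w^5) with (w^3*w^2) by ring. assert (0 <= w^2) by apply pow2_ge_0. nra. }
    assert (NUM : 2*u + 2*r2*u*(2*x) <= (x - r2*u)*(w - 2*x)).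
    { rewrite <- hxu.
      assert (0 <= x - r2*x^2) by nra.
      assert ((x - r2*x^2)*(3*x) <= (x - r2*x^2)*(w - 2*x)) by (apply Rmult_le_compat_l; lra).
      assert (0 <= x^2*(1 - 7*r2*x)) by (apply Rmult_le_pos; nra).
      nra. }
    assert (EA := eps_b L a1 a2 t s1 s2 D1 D2 u w r2 x (2*x) hL ha pa1 pa2 hs ws1 ws2 tp
                   ht1 ht2 h1 h2 tV hr2 hr hu ltac:(lra) ltac:(lra) NUM).
    assert (EB := eps_b L' b1 b2 t s1 s2 D1 D2 u w r2 x (2*x) hL' hb pb1 pb2 hs ws1 ws2 tp
                   ht1 ht2 h3 h4 tV hr2 hr hu ltac:(lra) ltac:(lra) NUM).
    assert (KG := Kgen a1 a2 b1 b2 L L' D1 D2 u (2*x) r2 pa1 pa2 ha pb1 pb2 hb hr hr2 hL hL'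
                   h1 h2 h3 h4 (proj1 EA) (proj2 EA) (proj1 EB) (proj2 EB)).
    set (K := Rabs (/ (a1 + a2) - / (b1 + b2))) in *.
    set (V := x - r2*u) in *.
    assert (Vpos : 0 < V) by (unfold V; rewrite <- hxu; nra).
    exists ((1-2*x)*(2*u)/V). split.
    + assert (K*V <= K*(b1+b2)*L').
      { rewrite Rmult_assoc. apply Rmult_le_compat_l; [lra|].
        replace V with (1*V) by ring. apply Rmult_le_compat; lra. }
      apply (Rmult_le_reg_r V); [lra|]. unfold Rdiv.
      rewrite Rmult_assoc, Rinv_l by lra. lra.
    + assert (E : 2*u + 2*((1 - 2*x)*(2*u)/V) - (r2*u + 4*x) =
                  (2 - r2)*x*x*(x - r2*u - 4*x)/V).
      { unfold V in *. rewrite <- hxu in *. field. lra. }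
      assert ((2 - r2)*x*x*(x - r2*u - 4*x)/V <= 0).
      { unfold Rdiv.
        assert (0 < (2-r2)*x*x) by (apply Rmult_lt_0_compat; [apply Rmult_lt_0_compat|]; lra).
        assert (0 < / V) by (apply Rinv_0_lt_compat; lra).
        assert (0 <= r2*u) by (rewrite <- hxu; nra).
        assert ((2 - r2)*x*x*(x - r2*u - 4*x) <= 0) by nra.
        nra. }
      lra.
Qed.

Lemma side_pos s : 0 < side s.
Proof. unfold side. apply pow_lt. lra. Qed.

Lemma side_le1 s : side s <= 1.
Proof. unfold side. rewrite <- (pow1 s). apply pow_incr. lra. Qed.

Lemma side_S s : side (S s) = side s / 2.
Proof. unfold side. simpl. field. Qed.

Lemma side_mul s : 2^s * side s = 1.
Proof. unfold side. rewrite <- Rpow_mult_distr. rewrite Rinv_r by lra. apply pow1. Qed.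

Lemma box_coords s i j p : is_box s i j -> in_box s i j p ->
  0 <= fst p <= 1 /\ 0 <= snd p <= 1.
Proof.
  intros [hi hj] [[h1 h2] [h3 h4]].
  assert (u0 := side_pos s). assert (M := side_mul s).
  assert (Ii : INR i + 1 <= 2^s).
  { replace (INR i + 1) with (INR (S i)) by (rewrite S_INR; ring).
    replace (2^s) with (INR (2^s)) by (rewrite pow_INR; f_equal; simpl; ring).
    apply le_INR. exact hi. }
  assert (Ij : INR j + 1 <= 2^s).
  { replace (INR j + 1) with (INR (S j)) by (rewrite S_INR; ring).
    replace (2^s) with (INR (2^s)) by (rewrite pow_INR; f_equal; simpl; ring).
    apply le_INR. exact hj. }
  assert (0 <= INR i) by apply pos_INR. assert (0 <= INR j) by apply pos_INR.
  assert (0 <= INR i * side s) by (apply Rmult_le_pos; lra).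
  assert (0 <= INR j * side s) by (apply Rmult_le_pos; lra).
  assert ((INR i + 1) * side s <= 1) by (rewrite <- M; apply Rmult_le_compat_r; lra).
  assert ((INR j + 1) * side s <= 1) by (rewrite <- M; apply Rmult_le_compat_r; lra).
  lra.
Qed.

Lemma box_center s i j p : in_box s i j p ->
  Rabs (fst p - fst (center s i j)) <= side s / 2 /\
  Rabs (snd p - snd (center s i j)) <= side s / 2.
Proof.
  intros [[h1 h2] [h3 h4]]. unfold center; simpl.
  split; apply Rabs_le; lra.
Qed.

Lemma center_in s i j : in_box s i j (center s i j).
Proof.
  assert (u0 := side_pos s). unfold in_box, center; simpl. lra.
Qed.

Lemma lam_eq b a l p : line_L b a -> on_line b a l p -> l * (fst a + snd a) = fst p + snd p.
Proof.
  intros [hb _] hp. rewrite hp. simpl. lra.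
Qed.

Lemma lam_val b a l p : line_L b a -> on_line b a l p -> l = (fst p + snd p) / (fst a + snd a).
Proof.
  intros hl hp. assert (E := lam_eq b a l p hl hp).
  destruct hl as [_ [h1 [h2 _]]]. rewrite <- E. field. lra.
Qed.

Lemma on_diff b a l1 l2 p1 p2 : on_line b a l1 p1 -> on_line b a l2 p2 ->
  fst p2 - fst p1 = (l2 - l1) * fst a /\ snd p2 - snd p1 = (l2 - l1) * snd a.
Proof. intros h1 h2. rewrite h1, h2. simpl. split; ring. Qed.

Lemma lam_bound (S S' sg sg' E G : R) : 0 <= S' <= 2 -> Rabs (S - S') <= E ->
  1 <= sg -> 1 <= sg' -> Rabs (/sg - /sg') <= G ->
  Rabs (S/sg - S'/sg') <= E + 2*G.
Proof.
  intros hS hE h1 h2 hG.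
  replace (S/sg - S'/sg') with ((S - S') * /sg + S' * (/sg - /sg')) by (field; lra).
  eapply Rle_trans. apply Rabs_triang. rewrite !Rabs_mult.
  assert (0 < /sg <= 1) by (split; [apply Rinv_0_lt_compat; lra| rewrite <- Rinv_1; apply Rinv_le_contravar; lra]).
  rewrite (Rabs_right (/sg)) by lra. rewrite (Rabs_right S') by lra.
  assert (0 <= Rabs (S - S')) by apply Rabs_pos.
  assert (0 <= Rabs (/ sg - / sg')) by apply Rabs_pos.
  apply Rplus_le_compat; nra.
Qed.

Lemma regime s : 1/32 <= side s \/ side s = 1/64 \/ side s = 1/128 \/ side s <= 1/256.
Proof.
  do 8 (destruct s as [|s]; [unfold side; simpl; lra|]).
  right; right; right.
  replace (S (S (S (S (S (S (S (S s)))))))) with (8 + s)%nat by lia.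
  unfold side. rewrite pow_add.
  assert ((/2)^s <= 1) by (rewrite <- (pow1 s); apply pow_incr; lra).
  assert (0 < (/2)^s) by (apply pow_lt; lra).
  simpl. nra.
Qed.

Lemma w_facts u : 0 < u -> 0 < Rpower u (/5) /\ (Rpower u (/5))^5 = u.
Proof.
  intros hu. split.
  - unfold Rpower. apply exp_pos.
  - rewrite <- Rpower_pow by (unfold Rpower; apply exp_pos).
    rewrite Rpower_mult. replace (/5 * INR 5) with 1 by (simpl; field).
    apply Rpower_1; auto.
Qed.

Lemma line_unit b a : line_L b a -> 0 < fst a /\ 0 < snd a /\ (fst a)^2 + (snd a)^2 = 1.
Proof. intros [_ [h1 [h2 h3]]]. auto. Qed.

Lemma seg_facts s i1 j1 i2 j2 b a lp lq p q :
  in_box s i1 j1 p -> in_box s i2 j2 q -> line_L b a -> on_line b a lp p -> on_line b a lq q ->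
  Rabs ((lq - lp) * fst a - (fst (center s i2 j2) - fst (center s i1 j1))) <= side s /\
  Rabs ((lq - lp) * snd a - (snd (center s i2 j2) - snd (center s i1 j1))) <= side s.
Proof.
  intros hp hq hl ep eq.
  destruct (on_diff b a lp lq p q ep eq) as [e1 e2].
  destruct (box_center s i1 j1 p hp) as [c1 c2].
  destruct (box_center s i2 j2 q hq) as [c3 c4].
  apply Rabs_le_inv in c1. apply Rabs_le_inv in c2.
  apply Rabs_le_inv in c3. apply Rabs_le_inv in c4.
  split; apply Rabs_le; lra.
Qed.

Lemma good_facts s i1 j1 i2 j2 : good_pair s i1 j1 i2 j2 ->
  let D1 := fst (center s i2 j2) - fst (center s i1 j1) in
  let D2 := snd (center s i2 j2) - snd (center s i1 j1) in
  0 <= D1 /\ 0 <= D2 /\ side s <= D1^2 + D2^2 /\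
  exists b a, traverses s i1 j1 i2 j2 b a /\ Rpower (side s) (/5) <= lhat a.
Proof.
  intros [ib1 [ib2 [nn [nc nd]]]] D1 D2.
  assert (hple : ple (center s i1 j1) (center s i2 j2)) by (apply NNPP; exact nn).
  assert (hd : dist2 (center s i1 j1) (center s i2 j2) >= sqrt (side s)).
  { apply Rnot_lt_ge. intro h. apply nc. split; auto. }
  destruct hple as [hp1 hp2].
  assert (u0 := side_pos s).
  assert (hD : side s <= D1^2 + D2^2).
  { apply Rnot_lt_le. intro h. unfold dist2 in hd.
    assert (E : (fst (center s i1 j1) - fst (center s i2 j2))^2 +
                (snd (center s i1 j1) - snd (center s i2 j2))^2 = D1^2 + D2^2)
      by (unfold D1, D2; ring).
    rewrite E in hd.
    assert (sqrt (D1^2+D2^2) < sqrt (side s)).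
    { apply sqrt_lt_1; try lra. assert (0 <= D1^2) by apply pow2_ge_0.
      assert (0 <= D2^2) by apply pow2_ge_0. lra. }
    lra. }
  split; [unfold D1; lra|]. split; [unfold D2; lra|]. split; [exact hD|].
  apply NNPP. intro H. apply nd. split; [split; auto|]. split; [auto|].
  intros b a ht. apply Rnot_le_lt. intro hl. apply H. exists b, a. auto.
Qed.

Lemma partK s i1 j1 i2 j2 p q p' q' b a b' a' lp lq lp' lq' :
  good_pair s i1 j1 i2 j2 ->
  in_box s i1 j1 p -> in_box s i2 j2 q ->
  in_box s i1 j1 p' -> in_box s i2 j2 q' ->
  plt p q -> plt p' q' ->
  line_L b a -> on_line b a lp p -> on_line b a lq q ->
  line_L b' a' -> on_line b' a' lp' p' -> on_line b' a' lq' q' ->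
  exists G, Rabs (/(fst a + snd a) - /(fst a' + snd a')) <= G /\
     2 * side s + 2 * G <= sqrt 2 * side s + 4 * sqrt (side s).
Proof.
  intros hg hp hq hp' hq' pq pq' hl ep eq hl' ep' eq'.
  destruct (good_facts s i1 j1 i2 j2 hg) as [D1p [D2p [hD [bs [as_ [htr hlh]]]]]].
  set (D1 := fst (center s i2 j2) - fst (center s i1 j1)) in *.
  set (D2 := snd (center s i2 j2) - snd (center s i1 j1)) in *.
  set (u := side s) in *.
  assert (u0 : 0 < u) by apply side_pos.
  assert (u1 : u <= 1) by apply side_le1.
  destruct (w_facts u u0) as [w0 w5].
  set (w := Rpower u (/5)) in *.
  destruct (line_unit b a hl) as [pa1 [pa2 ha]].
  destruct (line_unit b' a' hl') as [pb1 [pb2 hb]].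
  destruct (seg_facts s i1 j1 i2 j2 b a lp lq p q hp hq hl ep eq) as [h1 h2].
  destruct (seg_facts s i1 j1 i2 j2 b' a' lp' lq' p' q' hp' hq' hl' ep' eq') as [h3 h4].
  assert (hL : 0 < lq - lp).
  { destruct (on_diff b a lp lq p q ep eq) as [e1 _]. destruct pq as [c _].
    apply Rnot_le_lt. intro. nra. }
  assert (hL' : 0 < lq' - lp').
  { destruct (on_diff b' a' lp' lq' p' q' ep' eq') as [e1 _]. destruct pq' as [c _].
    apply Rnot_le_lt. intro. nra. }
  assert (hx : 0 < sqrt u) by (apply sqrt_lt_R0; lra).
  assert (hxu : (sqrt u)^2 = u) by (simpl; rewrite Rmult_1_r; apply sqrt_sqrt; lra).
  assert (hr : 0 < sqrt 2) by (apply sqrt_lt_R0; lra).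
  assert (hr2 : (sqrt 2)^2 = 2) by (simpl; rewrite Rmult_1_r; apply sqrt_sqrt; lra).
  apply (Kreal u (sqrt u) w (sqrt 2) (fst a) (snd a) (fst a') (snd a') (lq - lp) (lq' - lp') D1 D2);
    auto.
  - apply regime.
  - intros _.
    destruct htr as [hls [[x [mu [hx1 ex]]] [y [mu' [hy ey]]]]].
    destruct (line_unit bs as_ hls) as [ps1 [ps2 hs]].
    destruct (seg_facts s i1 j1 i2 j2 bs as_ mu mu' x y hx1 hy hls ex ey) as [k1 k2].
    exists (mu' - mu), (fst as_), (snd as_).
    unfold lhat in hlh.
    assert (Rmin (fst as_) (snd as_) <= fst as_) by apply Rmin_l.
    assert (Rmin (fst as_) (snd as_) <= snd as_) by apply Rmin_r.
    repeat split; auto; lra.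
Qed.

Lemma part2_real (a1 a2 c1 c2 K m D1 D2 u x : R) :
  0 < a1 -> 0 < a2 -> a1^2+a2^2 = 1 -> 0 < c1 -> 0 < c2 -> c1^2+c2^2 = 1 ->
  Rabs (K*a1 - D1) <= u -> Rabs (K*a2 - D2) <= u ->
  D1 = m*c1 -> D2 = m*c2 -> u <= D1^2+D2^2 -> 0 < x -> x^2 = u ->
  Rabs (/(a1+a2) - /(c1+c2)) <= 2*x.
Proof.
  intros pa1 pa2 ha pc1 pc2 hc k1 k2 e1 e2 hD hx hxu.
  assert (r0 : 0 < sqrt 2) by (apply sqrt_lt_R0; lra).
  assert (r2 : (sqrt 2)^2 = 2) by (simpl; rewrite Rmult_1_r; apply sqrt_sqrt; lra).
  destruct (unit_facts a1 a2 (sqrt 2)) as [sa1 [sa2 [a1le a2le]]]; auto.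
  destruct (unit_facts c1 c2 (sqrt 2)) as [sc1 [sc2 [c1le c2le]]]; auto.
  assert (SD := sig_diff a1 a2 c1 c2 1 pa1 pa2 pc1 pc2 ha hc
     ltac:(apply Rabs_le; lra) ltac:(apply Rabs_le; lra)).
  rewrite Rmult_1_l in SD.
  apply Rabs_le_inv in k1. apply Rabs_le_inv in k2.
  assert (CR : Rabs (m * (a1*c2 - a2*c1)) <= 2*u).
  { replace (m * (a1*c2 - a2*c1)) with (a1*(D2 - K*a2) - a2*(D1 - K*a1)) by (rewrite e1, e2; ring).
    apply Rabs_le. split; nra. }
  rewrite Rabs_mult in CR.
  assert (mm : x <= Rabs m).
  { apply sq_le; [apply Rabs_pos|]. rewrite pow2_abs.
    rewrite hxu. rewrite e1, e2 in hD.
    replace ((m*c1)^2 + (m*c2)^2) with (m^2*(c1^2+c2^2)) in hD by ring.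
    rewrite hc in hD. lra. }
  set (X := Rabs (a1*c2 - a2*c1)) in *.
  assert (X0 : 0 <= X) by apply Rabs_pos.
  assert (XB : X <= 2*x).
  { assert (x * X <= 2*u) by nra. rewrite <- hxu in H. nra. }
  assert (E : /(a1+a2) - /(c1+c2) = ((c1+c2) - (a1+a2)) / ((a1+a2)*(c1+c2))) by (field; lra).
  rewrite E. unfold Rdiv. rewrite Rabs_mult.
  rewrite (Rabs_right (/ ((a1+a2)*(c1+c2)))).
  2: { apply Rle_ge, Rlt_le, Rinv_0_lt_compat; nra. }
  assert (/ ((a1+a2)*(c1+c2)) <= 1).
  { rewrite <- Rinv_1. apply Rinv_le_contravar; nra. }
  assert (0 <= Rabs (c1 + c2 - (a1 + a2))) by apply Rabs_pos.
  assert (0 < / ((a1+a2)*(c1+c2))) by (apply Rinv_0_lt_compat; nra).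
  nra.
Qed.

Lemma same_box s i j p p' : in_box s i j p -> in_box s i j p' ->
  Rabs ((fst p + snd p) - (fst p' + snd p')) <= 2 * side s.
Proof.
  intros h h'. destruct (box_center s i j p h) as [c1 c2].
  destruct (box_center s i j p' h') as [c3 c4].
  apply Rabs_le_inv in c1. apply Rabs_le_inv in c2.
  apply Rabs_le_inv in c3. apply Rabs_le_inv in c4.
  apply Rabs_le. lra.
Qed.

Lemma center_box s i j p : in_box s i j p ->
  Rabs ((fst p + snd p) - (fst (center s i j) + snd (center s i j))) <= side s.
Proof.
  intros h. destruct (box_center s i j p h) as [c1 c2].
  apply Rabs_le_inv in c1. apply Rabs_le_inv in c2.
  apply Rabs_le. lra.
Qed.

Lemma sig_ge1 b a : line_L b a -> 1 <= fst a + snd a.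
Proof.
  intros hl. destruct (line_unit b a hl) as [h1 [h2 h]].
  assert (r0 : 0 < sqrt 2) by (apply sqrt_lt_R0; lra).
  assert (r2 : (sqrt 2)^2 = 2) by (simpl; rewrite Rmult_1_r; apply sqrt_sqrt; lra).
  destruct (unit_facts (fst a) (snd a) (sqrt 2)) as [x _]; auto.
Qed.

Theorem lemma9 :
  (forall (s i1 j1 i2 j2 : nat) (p q p' q' b a b' a' : pt)
          (lp lq lp' lq' : R),
     good_pair s i1 j1 i2 j2 ->
     in_box s i1 j1 p -> in_box s i2 j2 q ->
     in_box s i1 j1 p' -> in_box s i2 j2 q' ->
     plt p q -> plt p' q' ->
     line_L b a -> on_line b a lp p -> on_line b a lq q ->
     line_L b' a' -> on_line b' a' lp' p' -> on_line b' a' lq' q' ->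
     Rabs (lp - lp') <= sqrt 2 * side s + 4 * sqrt (side s) /\
     Rabs (lq - lq') <= sqrt 2 * side s + 4 * sqrt (side s))
  /\
  (exists C : R, forall (s i1 j1 i2 j2 : nat),
     good_pair s i1 j1 i2 j2 ->
     forall (b a bc ac : pt) (mu1 mu2 : R),
       traverses s i1 j1 i2 j2 b a ->
       line_L bc ac ->
       on_line bc ac mu1 (center s i1 j1) ->
       on_line bc ac mu2 (center s i2 j2) ->
       (forall (p : pt) (lam : R), in_box s i1 j1 p -> on_line b a lam p ->
          Rabs (lam - mu1) <= C * sqrt (side s)) /\
       (forall (p : pt) (lam : R), in_box s i2 j2 p -> on_line b a lam p ->
          Rabs (lam - mu2) <= C * sqrt (side s))).
Proof.
  split.
  - intros s i1 j1 i2 j2 p q p' q' b a b' a' lp lq lp' lq' hg hp hq hp' hq' pq pq'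
      hl ep eq hl' ep' eq'.
    destruct (partK s i1 j1 i2 j2 p q p' q' b a b' a' lp lq lp' lq' hg hp hq hp' hq' pq pq'
      hl ep eq hl' ep' eq') as [G [hG hN]].
    destruct hg as [ib1 [ib2 _]].
    assert (s1 := sig_ge1 b a hl). assert (s2 := sig_ge1 b' a' hl').
    rewrite (lam_val b a lp p hl ep), (lam_val b a lq q hl eq),
            (lam_val b' a' lp' p' hl' ep'), (lam_val b' a' lq' q' hl' eq').
    split.
    + destruct (box_coords s i1 j1 p' ib1 hp') as [x1 x2].
      eapply Rle_trans; [apply (lam_bound _ _ _ _ (2 * side s) G); auto; try lra|lra].
      apply same_box with i1 j1; auto.
    + destruct (box_coords s i2 j2 q' ib2 hq') as [x1 x2].
      eapply Rle_trans; [apply (lam_bound _ _ _ _ (2 * side s) G); auto; try lra|lra].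
      apply same_box with i2 j2; auto.
  - exists 5. intros s i1 j1 i2 j2 hg b a bc ac mu1 mu2 htr hlc e1 e2.
    destruct (good_facts s i1 j1 i2 j2 hg) as [D1p [D2p [hD _]]].
    destruct hg as [ib1 [ib2 _]].
    destruct htr as [hl [[x0 [lx [hx0 ex0]]] [y0 [ly [hy0 ey0]]]]].
    set (u := side s) in *.
    assert (u0 : 0 < u) by apply side_pos.
    assert (u1 : u <= 1) by apply side_le1.
    assert (hx : 0 < sqrt u) by (apply sqrt_lt_R0; lra).
    assert (hxu : (sqrt u)^2 = u) by (simpl; rewrite Rmult_1_r; apply sqrt_sqrt; lra).
    assert (xle : sqrt u <= 1) by (apply sq_le; lra).
    destruct (line_unit b a hl) as [pa1 [pa2 ha]].
    destruct (line_unit bc ac hlc) as [pc1 [pc2 hc]].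
    destruct (on_diff bc ac mu1 mu2 _ _ e1 e2) as [d1 d2].
    assert (sa := sig_ge1 b a hl). assert (sc := sig_ge1 bc ac hlc).
    assert (KB : forall K, Rabs (K*fst a - (fst (center s i2 j2) - fst (center s i1 j1))) <= u ->
                 Rabs (K*snd a - (snd (center s i2 j2) - snd (center s i1 j1))) <= u ->
                 Rabs (/(fst a + snd a) - /(fst ac + snd ac)) <= 2 * sqrt u).
    { intros K k1 k2.
      apply (part2_real (fst a) (snd a) (fst ac) (snd ac) K (mu2 - mu1)
        (fst (center s i2 j2) - fst (center s i1 j1)) (snd (center s i2 j2) - snd (center s i1 j1))
        u (sqrt u)); auto; lra. }
    split.
    + intros p lam hp ep.
      destruct (seg_facts s i1 j1 i2 j2 b a lam ly p y0 hp hy0 hl ep ey0) as [k1 k2].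
      assert (HG := KB _ k1 k2).
      rewrite (lam_val b a lam p hl ep), (lam_val bc ac mu1 _ hlc e1).
      destruct (box_coords s i1 j1 _ ib1 (center_in s i1 j1)) as [x1 x2].
      eapply Rle_trans; [apply (lam_bound _ _ _ _ u (2*sqrt u)); auto; try lra|].
      apply center_box; auto. nra.
    + intros p lam hp ep.
      destruct (seg_facts s i1 j1 i2 j2 b a lx lam x0 p hx0 hp hl ex0 ep) as [k1 k2].
      assert (HG := KB _ k1 k2).
      rewrite (lam_val b a lam p hl ep), (lam_val bc ac mu2 _ hlc e2).
      destruct (box_coords s i2 j2 _ ib2 (center_in s i2 j2)) as [x1 x2].
      eapply Rle_trans; [apply (lam_bound _ _ _ _ u (2*sqrt u)); auto; try lra|].
      apply center_box; auto. nra.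
Qed.
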